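(* Let $G$ be a discrete group, $X$ a finite proper $G$-CW-complex, $f\colon X\to X$ a $G$-map, $\Gamma=\Pi(G,X)$, $\phi=\Pi(G,f)$, $R$ a commutative ring, and $M=\bigoplus_{b\in B}R\Gamma(?,\beta(b))$ with $B$ finite and $\beta\colon B\to\mathrm{Ob}\,\Gamma$. For a conjugacy class $(H)$ of subgroups of $G$ let $M_H=\bigoplus_{b:\ \mathrm{tp}(\beta(b))=(H)}R\Gamma(?,\beta(b))$. Then every natural transformation $g\colon M\to M\circ\phi$ satisfies $g(M_H)\subseteq\bigoplus_{(K)\ge(H)}M_K\circ\phi$.
   Context: $\Pi(G,X)$: objects are $G$-maps $x\colon G/H\to X$, morphisms $x\to y$ ($y\colon G/K\to X$) are pairs $(\sigma,[w])$ with $\sigma\colon G/H\to G/K$ a $G$-map and $[w]$ the class rel $G/H\times\partial I$ of a $G$-map $w\colon G/H\times I\to X$ with $w_1=x$, $w_0=y\circ\sigma$; $\phi$ is composition with $f$. $R\Gamma$-modules are contravariant functors $\Gamma\to R$-modules; $R\Gamma(?,x)=R[\mathrm{Mor}_\Gamma(?,x)]$. The type of an object $x\colon G/H\to X$ is $\mathrm{tp}(x)=(H)$. On conjugacy classes of subgroups, $(H)\le(K)$ iff there exists a $G$-map $G/H\to G/K$. *)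

(* Defs.v *)
From HB Require Import structures.
From mathcomp Require Import all_boot all_order all_algebra.
From mathcomp Require Import all_classical all_reals all_analysis.
From mathcomp Require Import Rstruct Rstruct_topology.
Import Order.TTheory GRing.Theory Num.Theory.

Set Implicit Arguments.
Unset Strict Implicit.
Unset Printing Implicit Defensive.

Local Open Scope classical_set_scope.
Local Open Scope ring_scope.

Definition Real : realType := Rdefinitions.R.

Definition unitI : set Real := `[0, 1].

Definition sqnorm n (e : 'rV[Real]_n) : Real := \sum_(i < n) e ord0 i ^+ 2.
Definition disk n : set 'rV[Real]_n := [set e | sqnorm e <= 1].
Definition odisk n : set 'rV[Real]_n := [set e | sqnorm e < 1].
Definition sphere n : set 'rV[Real]_n := [set e | sqnorm e = 1].
Arguments disk n _ : clear implicits.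
Arguments odisk n _ : clear implicits.
Arguments sphere n _ : clear implicits.

Section Groups.
Context {G : groupType}.
Local Open Scope group_scope.

Definition is_subgroup (H : set G) : Prop :=
  [/\ H 1, (forall a b, H a -> H b -> H (a * b)) & (forall a, H a -> H a^-1)].

Definition lcoset (H : set G) (g : G) : set G := [set g * h | h in H].

Definition coset_space (H : set G) := {A : set G | exists g, A = lcoset H g}.

HB.instance Definition _ (H : set G) := gen_eqMixin (coset_space H).
HB.instance Definition _ (H : set G) := gen_choiceMixin (coset_space H).

Definition dcoset (H : set G) := discrete_topology (coset_space H).

Lemma lcoset_act (H : set G) (g g' : G) :
  [set g * a | a in lcoset H g'] = lcoset H (g * g').
Proof.
rewrite /lcoset; apply/seteqP; split => x /=.
- by case=> a [h Hh <-] <-; exists h => //; rewrite mulgA.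
- case=> h Hh <-; exists (g' * h); first by exists h.
  by rewrite mulgA.
Qed.

Definition cact (H : set G) (g : G) (A : dcoset H) : dcoset H.
Proof.
exists [set g * a | a in sval A].
case: A => A [g' eA] /=; exists (g * g'); rewrite eA; exact: lcoset_act.
Defined.

Definition Gmapc (H K : set G) (s : dcoset H -> dcoset K) : Prop :=
  forall g a, s (cact g a) = cact g (s a).

Definition conj_subgroup (H : set G) (c : G) : set G := [set c * h * c^-1 | h in H].

(* (H) = (K): H and K are conjugate, i.e. define the same conjugacy class *)
Definition same_class (H K : set G) : Prop := exists c, K = conj_subgroup H c.

(* (H) <= (K) iff there exists a G-map G/H -> G/K *)
Definition class_le (H K : set G) : Prop := exists s : dcoset H -> dcoset K, Gmapc s.

End Groups.

Section GSpaces.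
Context {G : groupType} {X : topologicalType} (act : G -> X -> X).
Local Open Scope group_scope.

Definition is_Gspace : Prop :=
  [/\ (forall x, act 1 x = x),
      (forall g h x, act (g * h) x = act g (act h x)) &
      (forall g, continuous (act g))].

(* X is a finite proper G-CW-complex: X is Hausdorff and has finitely many
   equivariant cells G/H_i x D^(n_i) with finite isotropy H_i, with
   characteristic G-maps Phi_i such that
   - the open cells Phi_i(G/H_i x int D^(n_i)) partition X (injectively),
   - the boundary of each cell lies in the union of cells of lower dimension,
   - X carries the weak (quotient) topology w.r.t. the Phi_i. *)
Definition finite_proper_GCW : Prop :=
  hausdorff_space X /\
  exists (I : finType) (H : I -> set G) (n : I -> nat)
         (Phi : forall i, (dcoset (H i) * 'rV[Real]_(n i))%type -> X),
  [/\ (forall i, is_subgroup (H i) /\ finite_set (H i)),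
      (forall i, {within [set: dcoset (H i)] `*` disk (n i), continuous (Phi i)}),
      (forall i g a e, disk (n i) e -> Phi i (cact g a, e) = act g (Phi i (a, e))),
      (forall x, exists i a e, odisk (n i) e /\ Phi i (a, e) = x) &
    [/\
      (forall i j a b e e', odisk (n i) e -> odisk (n j) e' ->
         Phi i (a, e) = Phi j (b, e') ->
         existT (fun k => (dcoset (H k) * 'rV[Real]_(n k))%type) i (a, e) =
         existT (fun k => (dcoset (H k) * 'rV[Real]_(n k))%type) j (b, e')),
      (forall i a e, sphere (n i) e ->
         exists j b e', [/\ (n j < n i)%N, disk (n j) e' & Phi j (b, e') = Phi i (a, e)]) &
      (forall U : set X, open U <->
         forall i, exists V : set (dcoset (H i) * 'rV[Real]_(n i))%type,
           open V /\
           ([set: dcoset (H i)] `*` disk (n i)) `&` (Phi i @^-1` U) =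
           ([set: dcoset (H i)] `*` disk (n i)) `&` V)]].

(* objects: G-maps x : G/H -> X (G/H discrete, so continuity is automatic) *)
Record obj := Obj {
  oH : set G;
  oH_sub : is_subgroup oH;
  omap : dcoset oH -> X;
  omap_equi : forall g a, omap (cact g a) = act g (omap a) }.

(* raw data (sigma, w) of a morphism x -> y *)
Definition premor (x y : obj) :=
  ((dcoset (oH x) -> dcoset (oH y)) * ((dcoset (oH x) * Real)%type -> X))%type.

Definition Gpath (H : set G) (w : (dcoset H * Real)%type -> X) : Prop :=
  {within [set: dcoset H] `*` unitI, continuous w} /\
  (forall g a t, unitI t -> w (cact g a, t) = act g (w (a, t))).

Definition valid_premor (x y : obj) (p : premor x y) : Prop :=
  [/\ Gmapc p.1, Gpath p.2,
      (forall a, p.2 (a, 1%R) = @omap x a) &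
      (forall a, p.2 (a, 0%R) = @omap y (p.1 a))].

Definition htpy_rel (H : set G) (w w' : (dcoset H * Real)%type -> X) : Prop :=
  exists F : ((dcoset H * Real) * Real)%type -> X,
  [/\ {within ([set: dcoset H] `*` unitI) `*` unitI, continuous F},
      (forall g a t s, unitI t -> unitI s -> F ((cact g a, t), s) = act g (F ((a, t), s))),
      (forall q, unitI q.2 -> F (q, 0%R) = w q /\ F (q, 1%R) = w' q) &
      (forall a s, unitI s -> F ((a, 0%R), s) = w (a, 0%R) /\ F ((a, 1%R), s) = w (a, 1%R))].

Definition premor_rel (x y : obj) (p q : premor x y) : Prop :=
  p.1 = q.1 /\ htpy_rel p.2 q.2.

(* morphisms x -> y: classes (sigma, [w]), represented as the set of
   valid representatives *)
Definition mor_class (x y : obj) (p : premor x y) : set (premor x y) :=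
  [set q | valid_premor q /\ premor_rel p q].

Definition is_mor (x y : obj) (C : set (premor x y)) : Prop :=
  exists p, valid_premor p /\ C = mor_class p.

Definition mor (x y : obj) := {C : set (premor x y) | is_mor C}.

HB.instance Definition _ (x y : obj) := gen_eqMixin (mor x y).
HB.instance Definition _ (x y : obj) := gen_choiceMixin (mor x y).

(* composition of representatives: (tau,[v]) o (sigma,[w]) = (tau sigma, [w * v sigma])
   where the composite path runs through w on [1/2,1] and v o sigma on [0,1/2] *)
Definition pcomp (x y z : obj) (q : premor y z) (p : premor x y) : premor x z :=
  (q.1 \o p.1,
   fun r => if (2^-1 <= r.2)%R then p.2 (r.1, 2 * r.2 - 1)%R
            else q.2 (p.1 r.1, 2 * r.2)%R).

Definition comp_set (x y z : obj) (D : set (premor y z)) (C : set (premor x y)) :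
    set (premor x z) :=
  [set r | valid_premor r /\ exists p q, [/\ C p, D q & premor_rel (pcomp q p) r]].

End GSpaces.

Section Phi.
Context {G : groupType} {X : topologicalType} (act : G -> X -> X) (f : X -> X)
        (hf : forall g x, f (act g x) = act g (f x)).

Definition phi_obj (x : obj act) : obj act.
Proof.
refine (@Obj _ _ act (oH x) (oH_sub x) (f \o @omap _ _ act x) _).
by move=> g a /=; rewrite omap_equi hf.
Defined.

Definition phi_premor (x y : obj act) (p : premor x y) : premor (phi_obj x) (phi_obj y) :=
  (p.1, f \o p.2).

Definition phi_set (x y : obj act) (C : set (premor x y)) :
    set (premor (phi_obj x) (phi_obj y)) :=
  [set r | valid_premor r /\ exists p, C p /\ premor_rel (phi_premor p) r].

End Phi.

Section Module.
Context {G : groupType} {X : topologicalType} (act : G -> X -> X)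
        {Rg : comPzRingType} {B : finType} (beta : B -> obj act).

(* basis of M(y): pairs (b, u) with u in Mor(y, beta b) *)
Definition key (y : obj act) := {b : B & mor y (beta b)}.

HB.instance Definition _ (y : obj act) := gen_eqMixin (key y).
HB.instance Definition _ (y : obj act) := gen_choiceMixin (key y).

(* elements of M(y) = finitely supported functions key y -> R *)
Definition finsupp (y : obj act) (m : key y -> Rg) : Prop :=
  finite_set [set k | m k != 0].

(* M(u) : M(z) -> M(y) for a morphism u : y -> z (given by its class U):
   the R-linear extension of (b, v) |-> (b, v o u) *)
Definition Mact (y z : obj act) (U : set (premor y z)) (m : key z -> Rg) : key y -> Rg :=
  fun k => \sum_(k' \in [set k' : key z |
       existT (fun b => set (premor y (beta b))) (projT1 k') (comp_set (sval (projT2 k')) U)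
     = existT (fun b => set (premor y (beta b))) (projT1 k) (sval (projT2 k))]) m k'.

End Module.

Definition is_nat_trans {G : groupType} {X : topologicalType} (act : G -> X -> X)
    (f : X -> X) (hf : forall g x, f (act g x) = act g (f x))
    {Rg : comPzRingType} {B : finType} (beta : B -> obj act)
    (g : forall y : obj act, (key beta y -> Rg) -> (key beta (phi_obj hf y) -> Rg)) : Prop :=
  [/\ (forall y m, finsupp m -> finsupp (g y m)),
      (forall y m1 m2, finsupp m1 -> finsupp m2 ->
         g y (fun k => m1 k + m2 k) = (fun k => g y m1 k + g y m2 k)),
      (forall y (r : Rg) m, finsupp m ->
         g y (fun k => r * m k) = (fun k => r * g y m k)) &
      (forall y z (u : mor y z) m, finsupp m ->
         g y (Mact (sval u) m) = Mact (@phi_set _ _ act f hf _ _ (sval u)) (g z m))].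

(* Main.v *)
From Pilot Require Import Defs.
From HB Require Import structures.
From mathcomp Require Import all_boot all_order all_algebra.
From mathcomp Require Import all_classical all_reals all_analysis.
From mathcomp Require Import Rstruct Rstruct_topology.
Import Order.TTheory GRing.Theory Num.Theory.
Set Implicit Arguments.
Unset Strict Implicit.
Unset Printing Implicit Defensive.
Local Open Scope classical_set_scope.
Local Open Scope ring_scope.
Notation RR := Pilot.Defs.Real.
From mathcomp Require Import lra.
Lemma wcomp (T U V : topologicalType) (A : set T) (B : set U) (f : U -> V) (h : T -> U) :
  {within B, continuous f} -> continuous h -> (forall x, A x -> B (h x)) ->
  {within A, continuous (f \o h)}.
Proof.
move=> /subspace_continuousP cf ch hAB; apply/subspace_continuousP => x Ax.
apply: (cvg_comp h f _ (cf _ (hAB _ Ax))).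
move=> P /=; rewrite !nbhs_simpl /within /= => nP.
have := ch x _ nP; rewrite nbhs_simpl /=; apply: filterS.
by move=> z Pz Az; apply: Pz; apply: hAB.
Qed.

Lemma dcont (T : discreteTopologicalType) (Y : topologicalType) (f : T -> Y) :
  continuous f.
Proof.
move=> x P /nbhs_singleton Pfx; rewrite /= nbhs_principalE.
by apply/principal_filterP.
Qed.

Lemma closed_unitI : closed unitI.
Proof. exact: interval_closed. Qed.
Lemma c_aff (a b : RR) : continuous (fun t : RR => a * t + b).
Proof.
move=> t; apply: cvgD; last exact: cvg_cst.
by apply: cvgM; [exact: cvg_cst| exact: cvg_id].
Qed.

Lemma c_fst (T U : topologicalType) : continuous (@fst T U).
Proof. by move=> x; apply: cvg_fst. Qed.
Lemma c_snd (T U : topologicalType) : continuous (@snd T U).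
Proof. by move=> x; apply: cvg_snd. Qed.

Lemma c_pair (T U V : topologicalType) (f : T -> U) (g : T -> V) :
  continuous f -> continuous g -> continuous (fun x => (f x, g x)).
Proof. by move=> cf cg x; apply: cvg_pair; [exact: cf|exact: cg]. Qed.

Lemma c_comp (T U V : topologicalType) (f : T -> U) (g : U -> V) :
  continuous f -> continuous g -> continuous (fun x => g (f x)).
Proof. by move=> cf cg x; apply: continuous_comp; [exact: cf|exact: cg]. Qed.

Lemma c_max (T : topologicalType) (f g : T -> RR) :
  continuous f -> continuous g -> continuous (fun x => Num.max (f x) (g x)).
Proof.
move=> cf cg x. have := @continuous_max _ T f g x (cf x) (cg x). by [].
Qed.

Lemma c_mul (T : topologicalType) (f g : T -> RR) :
  continuous f -> continuous g -> continuous (fun x => f x * g x).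
Proof. by move=> cf cg x; apply: cvgM; [exact: cf|exact: cg]. Qed.
Lemma c_add (T : topologicalType) (f g : T -> RR) :
  continuous f -> continuous g -> continuous (fun x => f x + g x).
Proof. by move=> cf cg x; apply: cvgD; [exact: cf|exact: cg]. Qed.
Lemma c_cst (T U : topologicalType) (c : U) : continuous (fun _ : T => c).
Proof. by move=> x; apply: cvg_cst. Qed.
Lemma unitIP (t : RR) : unitI t <-> (0 <= t <= 1).
Proof. by rewrite /unitI /= in_itv /=. Qed.

Lemma weq (T U : topologicalType) (A : set T) (f g : T -> U) :
  {in A, f =1 g} -> {within A, continuous f} -> {within A, continuous g}.
Proof. by move=> e cf; apply: (subspace_eq_continuous e cf). Qed.

Lemma closed_pre (T : topologicalType) (h : T -> RR) (P : set RR) :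
  continuous h -> closed P -> closed (h @^-1` P).
Proof. by move=> ch cP; apply: preimage_closed => // x _; apply: ch. Qed.

Lemma test (t : RR) : 0 <= t <= 1 -> ~~ (t <= 2^-1) -> 0 <= 2 * t - 1 <= 1.
Proof. move=> /andP[h1 h2]; rewrite -ltNge => h3. apply/andP; split; lra. Qed.

Section Htpy.
Context {G : groupType} {X : topologicalType} (act : G -> X -> X) (H : set G).
Local Notation D1 := ([set: dcoset H] `*` unitI).
Local Notation D2 := (([set: dcoset H] `*` unitI) `*` unitI).

Lemma uI2 (t : RR) : unitI t -> t <= 2^-1 -> unitI (2 * t + 0).
Proof. by move=> /unitIP /andP[h1 h2] h3; apply/unitIP/andP; split; lra. Qed.
Lemma uI2' (t : RR) : unitI t -> ~~ (t <= 2^-1) -> unitI (2 * t + -1).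
Proof. by move=> /unitIP /andP[h1 h2]; rewrite -ltNge => h3; apply/unitIP/andP; split; lra. Qed.
Lemma uIN (t : RR) : unitI t -> unitI (-1 * t + 1).
Proof. by move=> /unitIP /andP[h1 h2]; apply/unitIP/andP; split; lra. Qed.
Lemma uI0 : unitI (0 : RR). Proof. by apply/unitIP; rewrite lexx ler01. Qed.
Lemma uI1 : unitI (1 : RR). Proof. by apply/unitIP; rewrite lexx ler01. Qed.

Lemma htpy_refl (w : (dcoset H * RR)%type -> X) : Gpath act w -> htpy_rel act w w.
Proof.
move=> [cw ew]; exists (w \o fst); split.
- apply: (wcomp cw (@c_fst _ _)) => z [[_ ?] ?]; by split.
- by move=> g a t s ut us /=; exact: ew.
- by [].
- by [].
Qed.

Lemma htpy_sym (w w' : (dcoset H * RR)%type -> X) : htpy_rel act w w' -> htpy_rel act w' w.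
Proof.
move=> [F [cF eF nF fF]].
exists (F \o (fun z => (z.1, -1 * z.2 + 1))); split.
- apply: (wcomp cF).
    apply: c_pair; first exact: c_fst.
    exact: (c_comp (@c_snd _ _) (@c_aff (-1) 1)).
  by move=> z [Dz uz]; split => //; apply: uIN.
- by move=> g a t s ut us /=; apply: eF => //; apply: uIN.
- move=> q uq /=.
  have -> : (-1 * 0 + 1 : RR) = 1 by lra.
  have -> : (-1 * 1 + 1 : RR) = 0 by lra.
  by have [-> ->] := nF q uq.
- move=> a s us /=.
  have [f0 f1] := fF a _ (uIN us).
  have [g0 g1] := fF a _ uI1.
  have [_ n0] := nF (a, 0) uI0.
  have [_ n1] := nF (a, 1) uI1.
  by rewrite f0 f1 -g0 -g1 n0 n1.
Qed.

Definition A1 : set ((dcoset H * RR) * RR) :=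
  ((fun z => z.1.2) @^-1` unitI) `&` (snd @^-1` (unitI `&` [set x | x <= 2^-1])).
Definition A2 : set ((dcoset H * RR) * RR) :=
  ((fun z => z.1.2) @^-1` unitI) `&` (snd @^-1` (unitI `&` [set x | 2^-1 <= x])).

Lemma c12 : continuous (fun z : (dcoset H * RR) * RR => z.1.2).
Proof. exact: (c_comp (@c_fst _ _) (@c_snd _ _)). Qed.

Lemma closedA1 : closed A1.
Proof.
apply: closedI; first exact: (closed_pre c12 closed_unitI).
apply: (closed_pre (@c_snd _ _)); apply: closedI; first exact: closed_unitI.
exact: closed_le.
Qed.
Lemma closedA2 : closed A2.
Proof.
apply: closedI; first exact: (closed_pre c12 closed_unitI).
apply: (closed_pre (@c_snd _ _)); apply: closedI; first exact: closed_unitI.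
exact: closed_ge.
Qed.
Lemma D2_A12 : D2 = A1 `|` A2.
Proof.
apply/seteqP; split => z.
  move=> [[_ u1] u2]; case: (lerP z.2 2^-1) => h; [left|right]; do !split => //.
  by apply/ltW.
by case=> [[u1 [u2 _]]|[u1 [u2 _]]]; do !split.
Qed.

Lemma htpy_trans (w w' w'' : (dcoset H * RR)%type -> X) :
  htpy_rel act w w' -> htpy_rel act w' w'' -> htpy_rel act w w''.
Proof.
move=> [F1 [c1 e1 n1 f1]] [F2 [c2 e2 n2 f2]].
exists (fun z => if z.2 <= 2^-1 then F1 (z.1, 2 * z.2 + 0) else F2 (z.1, 2 * z.2 + -1)).
split.
- rewrite D2_A12; apply: withinU_continuous; [exact: closedA1|exact: closedA2| |].
  + apply: (@weq _ _ _ (F1 \o (fun z => (z.1, 2 * z.2 + 0)))).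
      by move=> z /set_mem [u1 [u2 h]] /=; rewrite h.
    apply: (wcomp c1).
      apply: c_pair; first exact: c_fst.
      exact: (c_comp (@c_snd _ _) (@c_aff 2 0)).
    by move=> z [u1 [u2 h]]; do !split => //; apply: uI2.
  + apply: (@weq _ _ _ (F2 \o (fun z => (z.1, 2 * z.2 + -1)))).
      move=> z /set_mem [u1 [u2 h]] /=; case: ifPn => // h'.
      have -> : z.2 = 2^-1 by apply/eqP; rewrite eq_le h h'.
      have -> : (2 * 2^-1 + 0 : RR) = 1 by lra.
      have -> : (2 * 2^-1 + -1 : RR) = 0 by lra.
      by rewrite (n1 _ u1).2 (n2 _ u1).1.
    apply: (wcomp c2).
      apply: c_pair; first exact: c_fst.
      exact: (c_comp (@c_snd _ _) (@c_aff 2 (-1))).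
    move=> z [u1 [u2 h]]; do !split => //; apply/unitIP.
    by move: u2 h => /unitIP /andP[? ?] /= ?; apply/andP; split; lra.
- move=> g a t s ut us /=; case: ifPn => h.
    by apply: e1 => //; apply: uI2.
  by apply: e2 => //; apply: uI2'.
- move=> q uq /=; split.
    have -> : ((0 : RR) <= 2^-1) = true by apply/idP; lra.
    have -> : (2 * 0 + 0 : RR) = 0 by lra.
    by rewrite (n1 _ uq).1.
  have -> : ((1 : RR) <= 2^-1) = false by apply/negbTE; rewrite -ltNge; lra.
  have -> : (2 * 1 + -1 : RR) = 1 by lra.
  by rewrite (n2 _ uq).2.
- move=> a s us /=; case: ifPn => h.
    by apply: f1 => //; apply: uI2.
  have [g0 g1] := f2 a _ (uI2' us h).
  rewrite g0 g1 -(n1 (a,0) uI0).2 -(n1 (a,1) uI1).2.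
  by rewrite (f1 a _ uI1).1 (f1 a _ uI1).2.
Qed.
End Htpy.

Section Htpy2.
Context {G : groupType} {X : topologicalType} (act : G -> X -> X).

Lemma uIm (t s : RR) : unitI t -> unitI s ->
  unitI ((-1 * s + 1) * Num.max 0 (2 * t + -1) + s * t).
Proof.
move=> /unitIP /andP[t0 t1] /unitIP /andP[s0 s1]; apply/unitIP.
rewrite maxEle; case: ifPn => h; apply/andP; split; nra.
Qed.

Lemma htpy_reparam (H : set G) (w : (dcoset H * RR)%type -> X) : Gpath act w ->
  htpy_rel act (fun z => if 2^-1 <= z.2 then w (z.1, 2 * z.2 - 1) else w (z.1, 0)) w.
Proof.
move=> [cw ew].
exists (w \o (fun z => (z.1.1, (-1 * z.2 + 1) * Num.max 0 (2 * z.1.2 + -1) + z.2 * z.1.2))).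
split.
- apply: (wcomp cw).
    apply: c_pair; first exact: (c_comp (@c_fst _ _) (@c_fst _ _)).
    apply: c_add; apply: c_mul.
    + exact: (c_comp (@c_snd _ _) (@c_aff (-1) 1)).
    + apply: c_max; first exact: c_cst.
      exact: (c_comp (c_comp (@c_fst _ _) (@c_snd _ _)) (@c_aff 2 (-1))).
    + exact: c_snd.
    + exact: (c_comp (@c_fst _ _) (@c_snd _ _)).
  by move=> z [[_ ut] us]; split => //; apply: uIm.
- by move=> g a t s ut us /=; apply: ew; apply: uIm.
- move=> [a t] ut /=; split.
    have -> : (-1 * 0 + 1 : RR) = 1 by lra.
    rewrite mul1r mul0r addr0 maxEle.
    case: ifPn => h1; case: ifPn => h2 //; exfalso; move: h1 h2; rewrite -?ltNge => h1 h2; lra.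
  have -> : (-1 * 1 + 1 : RR) = 0 by lra.
  by rewrite mul0r add0r mul1r.
- move=> a s us /=; split.
    have -> : ((2 : RR)^-1 <= 0) = false by apply/negbTE; rewrite -ltNge; lra.
    have -> : ((-1 * s + 1) * Num.max 0 (2 * 0 + -1) + s * 0 : RR) = 0.
      by rewrite maxEle; case: ifPn => h; lra.
    by [].
  have -> : ((2 : RR)^-1 <= 1) = true by apply/idP; lra.
  have -> : ((-1 * s + 1) * Num.max 0 (2 * 1 + -1) + s * 1 : RR) = 1.
    rewrite maxEle; case: ifPn => h; lra.
  by have -> : (2 * 1 - 1 : RR) = 1 by lra.
Qed.

Lemma htpy_whisker (H K : set G) (p1 : dcoset H -> dcoset K) (p2 : (dcoset H * RR)%type -> X)
  (v v' : (dcoset K * RR)%type -> X) :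
  Gmapc p1 -> Gpath act p2 -> htpy_rel act v v' -> (forall a, v (p1 a, 1) = p2 (a, 0)) ->
  htpy_rel act (fun r => if 2^-1 <= r.2 then p2 (r.1, 2 * r.2 - 1) else v (p1 r.1, 2 * r.2))
               (fun r => if 2^-1 <= r.2 then p2 (r.1, 2 * r.2 - 1) else v' (p1 r.1, 2 * r.2)).
Proof.
move=> gp1 [cp2 ep2] [F [cF eF nF fF]] hv.
set B1 : set ((dcoset H * RR) * RR) :=
  ((fun z => z.1.2) @^-1` (unitI `&` [set x | 2^-1 <= x])) `&` (snd @^-1` unitI).
set B2 : set ((dcoset H * RR) * RR) :=
  ((fun z => z.1.2) @^-1` (unitI `&` [set x | x <= 2^-1])) `&` (snd @^-1` unitI).
have cB1 : closed B1.
  apply: closedI; last exact: (closed_pre (@c_snd _ _) closed_unitI).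
  apply: (closed_pre (@c12 _ _)); apply: closedI; [exact: closed_unitI|exact: closed_ge].
have cB2 : closed B2.
  apply: closedI; last exact: (closed_pre (@c_snd _ _) closed_unitI).
  apply: (closed_pre (@c12 _ _)); apply: closedI; [exact: closed_unitI|exact: closed_le].
have DB : ([set: dcoset H] `*` unitI) `*` unitI = B1 `|` B2.
  apply/seteqP; split => z.
    move=> [[_ u1] u2]; case: (lerP 2^-1 z.1.2) => h; [left|right]; do !split => //.
    by apply/ltW.
  by case=> [[[u1 _] u2]|[[u1 _] u2]]; do !split.
exists (fun z => if 2^-1 <= z.1.2 then p2 (z.1.1, 2 * z.1.2 - 1) else F ((p1 z.1.1, 2 * z.1.2), z.2)).
split.
- rewrite DB; apply: withinU_continuous => //.
  + apply: (@weq _ _ _ (p2 \o (fun z => (z.1.1, 2 * z.1.2 + -1)))).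
      by move=> z /set_mem [[u1 h] u2] /=; rewrite h.
    apply: (wcomp cp2).
      apply: c_pair; first exact: (c_comp (@c_fst _ _) (@c_fst _ _)).
      exact: (c_comp (@c12 _ _) (@c_aff 2 (-1))).
    move=> z [[u1 h] u2]; split => //; apply/unitIP.
    by move: u1 h => /unitIP /andP[? ?] /= ?; apply/andP; split; lra.
  + apply: (@weq _ _ _ (F \o (fun z => ((p1 z.1.1, 2 * z.1.2 + 0), z.2)))).
      move=> z /set_mem [[u1 h] u2] /=; rewrite addr0; case: ifPn => // h'.
      have -> : z.1.2 = 2^-1 by apply/eqP; rewrite eq_le h h'.
      have -> : (2 * 2^-1 : RR) = 1 by lra.
      have -> : (1 - 1 : RR) = 0 by lra.
      by rewrite (fF _ _ u2).2 hv.
    apply: (wcomp cF).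
      apply: c_pair; last exact: c_snd.
      apply: c_pair.
        exact: (c_comp (c_comp (@c_fst _ _) (@c_fst _ _)) (@dcont _ _ p1)).
      exact: (c_comp (@c12 _ _) (@c_aff 2 0)).
    by move=> z [[u1 h] u2]; do !split => //; apply: uI2.
- move=> g a t s ut us /=; case: ifPn => h.
    apply: ep2; apply/unitIP.
    by move: ut h => /unitIP /andP[? ?] ?; apply/andP; split; lra.
  rewrite gp1; apply: eF => //; apply/unitIP.
  by move: ut h => /unitIP /andP[? ?]; rewrite -ltNge => ?; apply/andP; split; lra.
- move=> [a t] /= ut; case: ifPn => h //.
  have u2 : unitI (2 * t).
    by apply/unitIP; move: ut h => /unitIP /andP[? ?]; rewrite -ltNge => ?; apply/andP; split; lra.
  exact: (nF (p1 a, 2 * t) u2).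
- move=> a s us /=.
  have -> : ((2 : RR)^-1 <= 0) = false by apply/negbTE; rewrite -ltNge; lra.
  have -> : ((2 : RR)^-1 <= 1) = true by apply/idP; lra.
  by rewrite mulr0 (fF _ _ us).1.
Qed.
End Htpy2.

From Stdlib Require Import Eqdep_dec.

Section Cat.
Context {G : groupType} {X : topologicalType} (act : G -> X -> X).

Definition idpre (x : obj act) : premor x x := (id, fun r => Pilot.Defs.omap (o := x) r.1).

Lemma idpre_valid (x : obj act) : valid_premor (idpre x).
Proof.
split => //; split.
- apply: continuous_subspaceT.
  exact: (c_comp (@c_fst _ _) (@dcont _ _ (Pilot.Defs.omap (o := x)))).
- by move=> g a t _ /=; rewrite omap_equi.
Qed.

Definition idmor (x : obj act) : mor x x :=
  exist _ (mor_class (idpre x)) (ex_intro _ (idpre x) (conj (idpre_valid x) erefl)).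

Lemma prel_refl (x y : obj act) (p : premor x y) : valid_premor p -> premor_rel p p.
Proof. by case=> _ gp _ _; split => //; apply: htpy_refl. Qed.
Lemma prel_sym (x y : obj act) (p q : premor x y) : premor_rel p q -> premor_rel q p.
Proof. by case=> e h; split; [rewrite e|apply: htpy_sym]. Qed.
Lemma prel_trans (x y : obj act) (p q r : premor x y) :
  premor_rel p q -> premor_rel q r -> premor_rel p r.
Proof. by case=> e h [e' h']; split; [rewrite e|apply: htpy_trans h h']. Qed.

Lemma reparam_eq (x z : obj act) (p : premor x z) : valid_premor p ->
  (Pilot.Defs.pcomp (idpre z) p).2 =
  (fun r => if 2^-1 <= r.2 then p.2 (r.1, 2 * r.2 - 1) else p.2 (r.1, 0)).
Proof.
case=> _ _ _ h0; apply: funext => r /=; case: ifPn => // _.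
Qed.

Lemma comp_id (x z : obj act) (p0 : premor x z) : valid_premor p0 ->
  comp_set (mor_class (idpre z)) (mor_class p0) = mor_class p0.
Proof.
move=> vp0; apply/seteqP; split => r.
  move=> [vr [p [q [[vp rp] [vq rq] rr]]]]; split => //.
  have vp' := vp; case: vp' => gp pp p1 p0e.
  apply: (prel_trans rp); apply: prel_trans rr.
  split; first by rewrite /= -rq.1.
  apply: (htpy_trans (w' := (Pilot.Defs.pcomp (idpre z) p).2)).
    by rewrite reparam_eq //; apply/htpy_sym/htpy_reparam.
  apply: (htpy_whisker gp pp rq.2) => a /=.
  by rewrite p0e.
move=> [vr rr]; split => //; exists r, (idpre z); split => //.
- by split; [apply: idpre_valid | apply: prel_refl; apply: idpre_valid].
- split => //; rewrite reparam_eq //; apply: htpy_reparam.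
  by case: vr.
Qed.

End Cat.

Section Grp.
Context {G : groupType}.
Local Open Scope group_scope.

Lemma dcoset_eq (H : set G) (a b : dcoset H) : sval a = sval b -> a = b.
Proof. by case: a => A pa; case: b => B pb /= e; apply: eq_exist. Qed.

Lemma class_le_trans (H K L : set G) : class_le H K -> class_le K L -> class_le H L.
Proof.
move=> [s1 g1] [s2 g2]; exists (s2 \o s1) => g a /=.
by rewrite g1 g2.
Qed.

Lemma same_class_refl (K : set G) : same_class K K.
Proof.
exists 1; apply/seteqP; split => x.
  by move=> Kx; exists x => //; rewrite mul1g invg1 mulg1.
by case=> h Kh <-; rewrite mul1g invg1 mulg1.
Qed.

Definition conj_map (H : set G) (c : G) (A : dcoset H) : dcoset (conj_subgroup H c).
Proof.
exists [set a * c^-1 | a in sval A].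
case: A => A [g eA] /=; exists (g * c^-1); rewrite eA; apply/seteqP; split => x.
  case=> _ [h Hh <-] <-; exists (c * h * c^-1); first by exists h.
  by rewrite !mulgA mulgVK.
case=> _ [h Hh <-] <-; exists (g * h); first by exists h.
by rewrite !mulgA mulgVK.
Defined.

Lemma class_le_conj (H : set G) (c : G) : class_le H (conj_subgroup H c).
Proof.
exists (conj_map c) => g a; apply: dcoset_eq => /=.
apply/seteqP; split => x.
  by case=> _ [y Ay <-] <-; exists (y * c^-1); [exists y|rewrite mulgA].
by case=> _ [y Ay <-] <-; exists (g * y); [exists y|rewrite mulgA].
Qed.
End Grp.

Section Mod.
Context {G : groupType} {X : topologicalType} (act : G -> X -> X)
        {Rg : comPzRingType} {B : finType} (beta : B -> obj act).

Definition e1 (y : obj act) (k0 : key beta y) : key beta y -> Rg :=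
  fun k => if k == k0 then 1 else 0.

Lemma e1_fin (y : obj act) (k0 : key beta y) : finsupp (e1 k0).
Proof.
apply: (sub_finite_set _ (finite_set1 k0)) => k /=.
by rewrite /e1; case: (eqVneq k k0) => //; rewrite eqxx.
Qed.

Lemma Mact_e1 (y : obj act) (b0 : B) (u0 : mor y (beta b0)) :
  Mact (sval u0) (e1 (existT (fun b => mor (beta b0) (beta b)) b0 (idmor (beta b0)) : key beta (beta b0)))
  = e1 (existT (fun b => mor y (beta b)) b0 u0 : key beta y).
Proof.
set kid := (existT _ b0 (idmor (beta b0)) : key beta (beta b0)).
set k0 := (existT _ b0 u0 : key beta y).
case: u0 @k0 => U hU k0; have [p0 [vp0 EU]] := hU.
have Skid0 : forall k : key beta y,
  existT (fun b => set (premor y (beta b))) b0 (comp_set (sval (idmor (beta b0))) U)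
  = existT (fun b => set (premor y (beta b))) (projT1 k) (sval (projT2 k)) <-> k = k0.
  move=> k; rewrite /= EU comp_id // -EU; rewrite /k0.
  case: k => b [W hW] /=; split; last first.
    move=> E; have := congr1 (fun k : key beta y =>
      existT (fun b => set (premor y (beta b))) (projT1 k) (sval (projT2 k))) E.
    by move=> /= ->.
  move=> E; have Eb := congr1 (@projT1 _ _) E; simpl in Eb; subst b.
  have EW := inj_pair2_eq_dec _ (@eq_comparable B) _ _ _ _ E.
  by congr existT; apply: eq_exist.
apply: funext => k; rewrite /Mact.
set S := [set k' : key beta (beta b0) | _].
have Skid : S kid <-> k = k0 by exact: Skid0 k.
case: (eqVneq k k0) => [Ek|Nk].
  rewrite -(fsbig_widen [set kid] S); first last.
  - move=> k' [_ /= nk']; rewrite /e1 ifN; first by [].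
    by apply/negP => /eqP.
  - by move=> k' ->; apply/Skid.
  rewrite fsbig_set1 /e1 eqxx Ek eqxx; reflexivity.
rewrite fsbig1 /e1.
  by rewrite ifN.
move=> k' Sk'; case: eqP => [Ek'|_]; last by [].
by move: Sk'; rewrite Ek' => /Skid Ek; move: Nk; rewrite Ek eqxx.
Qed.
End Mod.
Lemma core (G : groupType) (X : topologicalType) (act : G -> X -> X)
  (f : X -> X) (hf : forall g x, f (act g x) = act g (f x))
  (Rg : comPzRingType) (B : finType) (beta : B -> obj act)
  (g : forall y : obj act, (key beta y -> Rg) -> (key beta (phi_obj hf y) -> Rg))
  (hg : is_nat_trans g) (y : obj act) (k0 : key beta y) (k : key beta (phi_obj hf y)) :
  g y (e1 k0) k != 0 -> class_le (oH (beta (projT1 k0))) (oH (beta (projT1 k))).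
Proof.
case: hg => _ _ _ hnat.
case: k0 => b0 u0 /= nz.
rewrite -Mact_e1 hnat in nz; last exact: e1_fin.
move: nz; rewrite /Mact.
set S := (X in \sum_(k' \in X) _) => nz.
case: (pselect (exists k', S k')) => [[k' Sk']|hno]; last first.
  move: nz; rewrite fsbig1 ?eqxx //.
  by move=> k' Sk'; exfalso; apply: hno; exists k'.
have Eb := congr1 (@projT1 _ _) Sk'; simpl in Eb.
case: k' Eb {Sk'} => b' w' /= Eb.
rewrite -Eb.
case: w' => W [p [vp _]].
by exists p.1; case: vp.
Qed.

Unset Implicit Arguments.
Theorem corollary4p2
  (G : groupType) (X : topologicalType) (act : G -> X -> X)
  (hact : is_Gspace act) (hX : finite_proper_GCW act)
  (f : X -> X) (hfc : continuous f) (hf : forall g x, f (act g x) = act g (f x))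
  (Rg : comPzRingType) (B : finType) (beta : B -> obj act)
  (g : forall y : obj act, (key beta y -> Rg) -> (key beta (phi_obj hf y) -> Rg))
  (hg : is_nat_trans g)
  (H : set G) (hH : is_subgroup H) :
  forall (y : obj act) (m : key beta y -> Rg),
    finsupp m ->
    (forall k, m k != 0 -> same_class H (oH (beta (projT1 k)))) ->
    forall k, g y m k != 0 ->
      exists K : set G,
        [/\ is_subgroup K, same_class K (oH (beta (projT1 k))) & class_le H K].
Proof.
move=> y m fm hm k gk.
exists (oH (beta (projT1 k))); split; [exact: oH_sub | exact: same_class_refl |].
suff [k0 mk0 cl] : exists2 k0, m k0 != 0 & class_le (oH (beta (projT1 k0))) (oH (beta (projT1 k))).
  have [c Ec] := hm k0 mk0; rewrite Ec in cl.
  exact: class_le_trans (class_le_conj H c) cl.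
have [s Es] := (finite_seqP _).1 fm.
have hs : forall k, m k != 0 -> k \in s.
  by move=> k' nk'; have : [set k | m k != 0] k' by []; rewrite Es.
have [hfin hadd hscal _] := hg.
have fin_of : forall (m' : key beta y -> Rg) (s' : seq (key beta y)),
    (forall k, m' k != 0 -> k \in s') -> finsupp m'.
  move=> m' s' h; apply: (sub_finite_set _ (finite_seq s')) => k' /= nk'.
  exact: h.
elim: s m {fm hm Es} hs gk => [|k0 s IH] m hs gk.
  have m0 : m = (fun _ => 0).
    by apply: funext => k'; apply/eqP; apply: contraT => /hs.
  have f0 : finsupp (fun _ : key beta y => (0 : Rg)).
    by apply: (fin_of _ [::]) => k'; rewrite eqxx.
  have := hadd y _ _ f0 f0.
  have -> : (fun _ : key beta y => (0 : Rg) + 0) = (fun _ => 0).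
    by apply: funext => k'; rewrite addr0.
  move=> /(congr1 (fun h => h k)) E.
  have : g y (fun _ => 0) k = 0.
    by apply: (@addrI _ (g y (fun _ => 0) k)); rewrite addr0 -E.
  by rewrite -m0 => E'; rewrite E' eqxx in gk.
set m1 := fun k => m k0 * e1 k0 k.
set m' := fun k => if k == k0 then 0 else m k.
have Em : m = fun k => m1 k + m' k.
  apply: funext => k'; rewrite /m1 /m' /e1.
  by case: (eqVneq k' k0) => [->|_]; rewrite ?mulr1 ?addr0 ?mulr0 ?add0r.
have fm' : finsupp m'.
  apply: (fin_of _ s) => k'; rewrite /m'; case: (eqVneq k' k0) => [_|nk]; first by rewrite eqxx.
  by move=> /hs; rewrite in_cons (negbTE nk).
have fm1 : finsupp m1.
  apply: (fin_of _ [:: k0]) => k'; rewrite /m1 /e1; case: (eqVneq k' k0) => [->|_].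
    by rewrite mem_seq1 eqxx.
  by rewrite mulr0 eqxx.
have hs' : forall k2, m' k2 != 0 -> k2 \in s.
  move=> k2; rewrite /m'; case: (eqVneq k2 k0) => [_|nk]; first by rewrite eqxx.
  by move=> /hs; rewrite in_cons (negbTE nk).
rewrite Em (hadd y _ _ fm1 fm') /= in gk.
case: (eqVneq (g y m' k) 0) => [E0|nz'].
  move: gk; rewrite E0 addr0 /m1 (hscal y _ _ (e1_fin k0)) => nz.
  exists k0; first by apply: contraNneq nz => ->; rewrite mul0r.
  by apply: (core hg); apply: contraNneq nz => ->; rewrite mulr0.
have [k1 mk1 cl] := IH m' hs' nz'.
exists k1 => //; move: mk1; rewrite /m'; case: (eqVneq k1 k0) => //; by rewrite eqxx.
Qed.
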